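(* Define $b(n)$ by $\sum_{n\ge1}b(n)q^n=-q(q^2;q)_\infty$. Then for every positive integer $n$, $$b(n)=\begin{cases}0, & \text{if } R(\lceil n\rceil_p)\text{ is positive},\\ -1, & \text{if } R(\lceil n\rceil_p)\text{ is odd and negative},\\ 1, & \text{if } R(\lceil n\rceil_p)\text{ is even and negative}.\end{cases}$$
   Context: $(z;q)_\infty=\prod_{j\ge0}(1-zq^j)$. $\mathcal{P}=\{m(3m+1)/2:m\in\mathbb{Z}\}$ is the set of (generalized) pentagonal numbers; for $n=m(3m+1)/2\in\mathcal{P}$ put $R(n)=m$ (well defined). $\lceil n\rceil_p$ is the smallest element of $\mathcal{P}$ that is $\ge n$. *)

(* Defs.v *)
From mathcomp Require Import all_boot all_order all_algebra.
Set Implicit Arguments. Unset Strict Implicit. Unset Printing Implicit Defensive.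
Import Order.TTheory GRing.Theory Num.Theory.
Local Open Scope ring_scope.

(* Generalized pentagonal number m(3m+1)/2 (the division is exact). *)
Definition pent (m : int) : int := ((m * (3 * m + 1)) %/ 2)%Z.

(* Truncation of the formal power series -q (q^2;q)_oo = -q prod_{j>=0} (1 - q^(j+2)):
   factors with j+2 > N do not affect coefficients of q^k for k <= N. *)
Definition gen_trunc (N : nat) : {poly int} :=
  - 'X * \prod_(j < N) (1 - 'X^(j.+2)).

Definition b (n : nat) : int := (gen_trunc n)`_n.

(* Main.v *)
From mathcomp Require Import all_boot all_order all_algebra.
From mathcomp Require Import ring zify.
Require Import Defs.
Import Order.TTheory GRing.Theory Num.Theory.
Local Open Scope ring_scope.

Fixpoint tri (k : nat) : nat := if k is k'.+1 then (tri k' + k'.+1)%N else 0%N.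
Fixpoint pN (k : nat) : nat := if k is k'.+1 then (pN k' + 3 * k' + 1)%N else 0%N.
Definition pP (k : nat) : nat := (pN k + k)%N.

Lemma pN_tri n : pN n.+1 = (n.+1 * n.+1 + tri n)%N.
Proof. elim: n => [//|n IH]. rewrite /= in IH *. lia. Qed.
Lemma pP_tri n : pP n.+1 = (n.+1 * n.+1 + tri n.+1)%N.
Proof. rewrite /pP pN_tri /=. lia. Qed.

Section Shanks.
Variables (R : comPzRingType) (x : R).
Definition Pr k n := \prod_(k <= i < n) (1 - x ^+ i.+1).
Definition A n := \sum_(0 <= k < n.+1) (-1)^+k * Pr k n * x ^+ (n * k + tri k).
Definition Sh n := 1 + \sum_(1 <= k < n.+1) (-1)^+k * (x ^+ pN k + x ^+ pP k).

Lemma A_step n : A n.+1 = A n + (-1)^+n.+1 * (x ^+ pN n.+1 + x ^+ pP n.+1).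
Proof.
pose u k := (-1)^+k * Pr k n * x ^+ (tri k + n.+1 * k.+1).
pose v k := if k is j.+1 then u j else 0.
have key : forall k, (0 <= k < n.+1)%N ->
  (-1)^+k * Pr k n.+1 * x ^+ (n.+1 * k + tri k) =
  (-1)^+k * Pr k n * x ^+ (n * k + tri k) - (v k.+1 - v k).
  move=> k /andP[_ kn].
  have -> : Pr k n.+1 = Pr k n * (1 - x ^+ n.+1) by rewrite /Pr big_nat_recr.
  rewrite /v /u.
  case: k kn => [|j] jn.
    rewrite /= !muln0 ?mul0n ?addn0 ?add0n ?muln1. ring.
  have -> : Pr j n = (1 - x ^+ j.+1) * Pr j.+1 n by rewrite /Pr big_ltn.
  set P := Pr j.+1 n.
  have e1 : (n.+1 * j.+1 + tri j.+1 = (n * j.+1 + tri j + j.+1) + j.+1)%N by rewrite /=; lia.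
  have e2 : (n * j.+1 + tri j.+1 = (n * j.+1 + tri j + j.+1))%N by rewrite /=; lia.
  have e3 : (tri j.+1 + n.+1 * j.+2 = (n * j.+1 + tri j + j.+1) + j.+1 + n.+1)%N by rewrite /=; lia.
  have e4 : (tri j + n.+1 * j.+1 = (n * j.+1 + tri j + j.+1))%N by lia.
  rewrite e1 e2 e3 e4 !exprD !exprS. ring.
rewrite /A big_nat_recr //= (eq_big_nat _ _ key) sumrB telescope_sumr //.
have -> : Pr n.+1 n.+1 = 1 by rewrite /Pr big_geq.
rewrite /v /u.
have -> : Pr n n = 1 by rewrite /Pr big_geq.
have -> : (pN n + 3 * n + 1 = tri n + n.+1 * n.+1)%N by have := pN_tri n; rewrite /=; lia.
have -> : (pP n.+1 = n.+1 * n.+1 + (tri n + n.+1))%N by have := pP_tri n; rewrite /=; lia.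
rewrite exprS. ring.
Qed.

Lemma A_Sh n : A n = Sh n.
Proof.
elim: n => [|n IH].
  by rewrite /A /Sh big_nat1 big_geq // /Pr big_geq // !mulr1 addr0.
by rewrite A_step IH /Sh [in RHS]big_nat_recr //= addrA.
Qed.
End Shanks.
Arguments Pr {R}. Arguments A {R}. Arguments Sh {R}.
Local Notation XX := ('X : {poly int}).

Lemma coef_sign (k : nat) (p : {poly int}) i : ((-1)^+k * p)`_i = (-1)^+k * p`_i.
Proof. rewrite -[in LHS]signr_odd -[in RHS]signr_odd !mulr_sign; by case: (odd k); rewrite ?coefN. Qed.

Lemma E_trunc N i : (i <= N)%N -> (Pr ('X : {poly int}) 0 N)`_i = (Sh ('X : {poly int}) N)`_i.
Proof.
move=> iN; rewrite -A_Sh /A big_ltn // muln0 /= expr0 mulr1 mul1r.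
have -> : \sum_(1 <= k < N.+1) (-1)^+k * Pr XX k N * 'X^(N * k + tri k) =
  (\sum_(1 <= k < N.+1) (-1)^+k * Pr XX k N * 'X^(N * k + tri k - N.+1)) * 'X^(N.+1).
  rewrite mulr_suml; apply: eq_big_nat => k /andP[k1 _].
  rewrite -[RHS]mulrA -exprD subnK //.
  case: k k1 => [//|k] _ /=; lia.
by rewrite coefD coefMXn ltnS iN addr0.
Qed.

Definition Q n : {poly int} := \prod_(j < n) (1 - 'X^(j.+2)).

Lemma Q_E n : (1 - 'X) * Q n = Pr ('X : {poly int}) 0 n.+1.
Proof. by rewrite /Pr big_ltn // big_add1 /= big_mkord expr1. Qed.

Lemma coef_div (p e : {poly int}) : (1 - 'X) * p = e ->
  forall k, p`_k = \sum_(0 <= j < k.+1) e`_j.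
Proof.
move=> <-; elim=> [|k IH].
  by rewrite big_nat1 mulrBl mul1r coefB coefXM /= subr0.
rewrite big_nat_recr //= -IH mulrBl mul1r coefB coefXM /=.
by rewrite addrC subrK.
Qed.

Lemma sum_eq (n a : nat) : \sum_(0 <= j < n) ((j == a)%:R : int) = (a < n)%:R.
Proof.
elim: n => [|n IH]; first by rewrite big_geq.
rewrite big_nat_recr //= IH.
case: (ltngtP a n) => h.
- by rewrite ltnS (ltnW h) addr0.
- by rewrite ltnS leqNgt h addr0.
- by rewrite h ltnSn add0r.
Qed.

Lemma coefSh N j : (Sh ('X : {poly int}) N)`_j = (j == 0)%:R +
   \sum_(1 <= k < N.+1) (-1)^+k * ((j == pN k)%:R + (j == pP k)%:R).
Proof.
rewrite /Sh coefD coef1 coef_sum; congr (_ + _).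
by apply: eq_bigr => k _; rewrite coef_sign coefD !coefXn.
Qed.

Lemma sumSh N n : \sum_(0 <= j < n) (Sh ('X : {poly int}) N)`_j =
  (0 < n)%:R + \sum_(1 <= k < N.+1) (-1)^+k * ((pN k < n)%:R + (pP k < n)%:R).
Proof.
under eq_bigr do rewrite coefSh.
rewrite big_split /= sum_eq; congr (_ + _).
rewrite exchange_big /=; apply: eq_bigr => k _.
by rewrite -mulr_sumr big_split /= !sum_eq.
Qed.

Lemma b_formula n : (0 < n)%N -> b n =
  - ((0 < n)%:R + \sum_(1 <= k < n.+2) (-1)^+k * ((pN k < n)%:R + (pP k < n)%:R)).
Proof.
case: n => [//|n] _.
rewrite /b /gen_trunc -/(Q n.+1) mulNr coefN coefXM /=.
rewrite (coef_div _ _ (Q_E n.+1)) -[1 + _](sumSh n.+2 n.+1); congr (- _).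
by apply: eq_big_nat => j /andP[_ jn]; rewrite E_trunc // ltnW // ltnW.
Qed.

Lemma pN_closed k : (pN k * 2 + k = 3 * (k * k))%N.
Proof. elim: k => [//|k IH] /=.
have e : (3 * (k.+1 * k.+1) = 3*(k*k) + 6*k + 3)%N by ring.
rewrite e -IH. ring. Qed.

Lemma pN_closedZ k : ((pN k)%:Z * 2 + k%:Z = 3 * (k%:Z * k%:Z))%R.
Proof. by rewrite -!PoszM -PoszD pN_closed. Qed.

Lemma pent_pos k : pent (k%:Z) = (pP k)%:Z.
Proof.
rewrite /pent.
have -> : (k%:Z * (3 * k%:Z + 1)) = (pP k)%:Z * 2.
  have h := pN_closedZ k.
  have -> : k%:Z * (3 * k%:Z + 1) = 3 * (k%:Z * k%:Z) + k%:Z by ring.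
  by rewrite -h /pP PoszD; ring.
by rewrite mulzK.
Qed.

Lemma pent_neg k : pent (- k%:Z) = (pN k)%:Z.
Proof.
rewrite /pent.
have -> : (- k%:Z * (3 * - k%:Z + 1)) = (pN k)%:Z * 2.
  have h := pN_closedZ k.
  have -> : - k%:Z * (3 * - k%:Z + 1) = 3 * (k%:Z * k%:Z) - k%:Z by ring.
  by rewrite -h; ring.
by rewrite mulzK.
Qed.

Lemma mono_of (f : nat -> nat) (hf : forall i, (f i < f i.+1)%N) a b :
  (f a < f b)%N = (a < b)%N.
Proof.
have H := homo_ltn ltn_trans hf.
case: (ltngtP a b) => h; first by rewrite H.
- by apply/negbTE; rewrite -leqNgt ltnW // H.
- by rewrite h ltnn.
Qed.

Lemma monoN a b : (pN a < pN b)%N = (a < b)%N.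
Proof. apply: (@mono_of pN) => i /=; lia. Qed.
Lemma monoP a b : (pP a < pP b)%N = (a < b)%N.
Proof. apply: (@mono_of pP) => i. rewrite /pP /= -!addnA ltn_add2l. lia. Qed.
Lemma monoNle a b : (pN a <= pN b)%N = (a <= b)%N.
Proof. by rewrite leqNgt monoN -leqNgt. Qed.

Lemma pN_ge k : (k <= pN k)%N.
Proof. elim: k => [//|k IH] /=; lia. Qed.

Lemma L1 k k0 : (0 < k)%N -> (pN k < pP k0)%N = (k <= k0)%N.
Proof.
move=> k1; rewrite /pP; case: (leqP k k0) => h.
  have := monoNle k k0; rewrite h => /idP; lia.
have := monoNle k0.+1 k; rewrite h /= => /idP; lia.
Qed.

Lemma L4 k k0 : (pP k < pN k0)%N = (k < k0)%N.
Proof.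
rewrite /pP; case: (ltnP k k0) => h.
  have := monoNle k.+1 k0; rewrite h /= => /idP; lia.
have := monoNle k0 k; rewrite h => /idP; lia.
Qed.

Definition alt a : int := \sum_(1 <= k < a.+1) (-1)^+k.

Lemma alt_val a : alt a = if odd a then -1 else 0.
Proof.
rewrite /alt; elim: a => [|a IH]; first by rewrite big_geq.
rewrite big_nat_recr //= IH -signr_odd /=.
by case: (odd a); rewrite /= ?expr0 ?expr1 ?addr0 ?add0r ?addNr.
Qed.

Lemma sum_ind N a : (a <= N)%N ->
  \sum_(1 <= k < N.+1) ((-1)^+k * (k <= a)%:R : int) = alt a.
Proof.
move=> aN; rewrite (big_cat_nat _ (n := a.+1)) //=.
have -> : \sum_(a.+1 <= k < N.+1) ((-1)^+k * (k <= a)%:R : int) = 0.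
  rewrite big_nat_cond big1 // => k /andP[/andP[ak _] _].
  by rewrite leqNgt ak mulr0.
rewrite addr0 /alt; apply: eq_big_nat => k /andP[_ ka].
by rewrite ltnS in ka; rewrite ka mulr1.
Qed.

Theorem lemma5p3 (n : nat) (m : int) :
  (0 < n)%N ->
  (n%:Z <= pent m) ->
  (forall m' : int, n%:Z <= pent m' -> pent m <= pent m') ->
  b n = (if 0 < m then 0 else if odd `|m|%N then -1 else 1).
Proof.
move=> n0 hn hmin.
rewrite b_formula // n0.
have key : forall m', (pent m' < n%:Z) = (pent m' < pent m).
  move=> m'; apply/idP/idP => h; first exact: (lt_le_trans h hn).
  rewrite ltNge; apply/negP => h2; have := hmin _ h2; by rewrite leNgt h.
have kN k : (pN k < n)%N = ((pN k)%:Z < pent m) by rewrite -ltz_nat -pent_neg key.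
have kP k : (pP k < n)%N = ((pP k)%:Z < pent m) by rewrite -ltz_nat -pent_pos key.
case: m hn hmin key kN kP => [k0|j] hn hmin key kN kP.
- rewrite pent_pos in kN kP hn.
  case: k0 hn hmin key kN kP => [|k1] hn hmin key kN kP.
    by move: hn; rewrite lez_nat leqn0 => /eqP h; rewrite h in n0.
  have e : \sum_(1 <= k < n.+2) (-1) ^+ k * ((pN k < n)%:R + (pP k < n)%:R)
      = \sum_(1 <= k < n.+2) ((-1) ^+ k * (k <= k1.+1)%:R + (-1) ^+ k * (k <= k1)%:R) :> int.
    apply: eq_big_nat => k /andP[k1' _].
    by rewrite kN kP !ltz_nat L1 // monoP ltnS mulrDr.
  have hb : (pN k1.+1 < n)%N by rewrite kN ltz_nat L1.
  have := pN_ge k1.+1 => hge.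
  rewrite e big_split /= !sum_ind; try lia.
  rewrite !alt_val /=; by case: (odd k1).
- rewrite NegzE pent_neg in kN kP hn.
  have e : \sum_(1 <= k < n.+2) (-1) ^+ k * ((pN k < n)%:R + (pP k < n)%:R)
      = \sum_(1 <= k < n.+2) ((-1) ^+ k * (k <= j)%:R + (-1) ^+ k * (k <= j)%:R) :> int.
    apply: eq_big_nat => k /andP[k1' _].
    by rewrite kN kP !ltz_nat monoN L4 ltnS mulrDr.
  have hb : (pP j < n)%N by rewrite kP ltz_nat L4.
  have := pN_ge j => hge.
  rewrite e big_split /= !sum_ind; try (rewrite /pP in hb; lia).
  rewrite !alt_val /=; by case: (odd j).
Qed.
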